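(* Let $k$ be a field of characteristic not $2$ or $3$, let $\mathcal{A}\in k^{n+1}\otimes\operatorname{Sym}_2k^{m+1}$ be a tensor with slices $A_0,\dots,A_n$ such that $\det\mathcal{A}(\mathbf{x},\cdot,\cdot)$ is reduced and irreducible, and let $X=Z(\det\mathcal{A}(\mathbf{x},\cdot,\cdot))\subseteq\mathbb{P}^n$ be the associated symmetroid hypersurface. Then for every smooth point $x$ of $X$ we have $\theta_X(x)=\psi(\varphi(x))$. For $x\in\mathbb{P}^n(\bar k)$, the quadric $Z(\widehat\psi(x))\subseteq\mathbb{P}^m$ is singular if and only if $x\in X(\bar k)$; furthermore, for any $x\in X(\bar k)$ the quadric $Z(\widehat\psi(x))$ is singular at the point $\varphi(x)$ (whenever $\varphi(x)$ is defined). For any $z=[H]\in\widehat{\mathbb{P}}^n(\bar k)$, the fibre $\psi^{-1}(z)$ is the base locus of the linear space of quadrics $\widehat\psi(H)$, i.e. of $\widehat\psi|_H:H\to\mathbb{P}H^0(\mathbb{P}^m,\mathcal{O}_{\mathbb{P}^m}(2))$.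
   Context: $\mathcal{A}$ is viewed as an $(n+1)$-tuple of symmetric $(m+1)\times(m+1)$ matrices $A_0,\dots,A_n$, and $\mathcal{A}(\mathbf{x},\cdot,\cdot)=\sum x_iA_i$. The maps are: $\widehat\psi:\mathbb{P}^n\to\mathbb{P}H^0(\mathbb{P}^m,\mathcal{O}_{\mathbb{P}^m}(2))$, $x\mapsto$ the quadratic form $\mathbf{y}^T\mathcal{A}(x,\cdot,\cdot)\mathbf{y}$; $\psi:\mathbb{P}^m\dashrightarrow\widehat{\mathbb{P}}^n$, $y\mapsto(y^TA_0y:\dots:y^TA_ny)$, where points of $\widehat{\mathbb{P}}^n$ are identified with hyperplanes of $\mathbb{P}^n$; the kernel map $\varphi:X\dashrightarrow\mathbb{P}^m$, $x\mapsto\mathbb{P}(\ker\mathcal{A}(x,\cdot,\cdot))$, defined where the corank is $1$; and the Gauss map $\theta_X:X\dashrightarrow\widehat{\mathbb{P}}^n$, $x\mapsto T_xX$, defined on smooth points. *)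

(* Defs.v *)
From HB Require Import structures.
From mathcomp Require Import all_boot all_order all_algebra.
From mathcomp Require Import mpoly.
Set Implicit Arguments. Unset Strict Implicit. Unset Printing Implicit Defensive.
Import GRing.Theory.
Local Open Scope ring_scope.

Definition pencil (R : comNzRingType) (n m : nat) (A : 'I_n.+1 -> 'M[R]_m.+1)
  : 'M[{mpoly R[n.+1]}]_m.+1 :=
  \matrix_(a, b) \sum_(i < n.+1) 'X_i * (A i a b)%:MP.

Definition detA (R : comNzRingType) (n m : nat) (A : 'I_n.+1 -> 'M[R]_m.+1)
  : {mpoly R[n.+1]} := \det (pencil A).

Definition mirreducible (R : fieldType) (N : nat) (p : {mpoly R[N]}) : Prop :=
  p != 0 /\ p \isn't a GRing.unit /\
  forall q r : {mpoly R[N]}, p = q * r -> q \is a GRing.unit \/ r \is a GRing.unit.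

Definition mreduced (R : fieldType) (N : nat) (p : {mpoly R[N]}) : Prop :=
  p != 0 /\
  forall q r : {mpoly R[N]}, p = q * q * r -> q \is a GRing.unit.

Definition ev (R : comNzRingType) (N : nat) (p : {mpoly R[N]}) (x : 'rV[R]_N) : R :=
  p.@[fun i => x 0 i].

Definition pencil_at (R : comNzRingType) (n m : nat) (A : 'I_n.+1 -> 'M[R]_m.+1)
  (x : 'rV[R]_n.+1) : 'M[R]_m.+1 := \sum_(i < n.+1) x 0 i *: A i.

Definition psi (R : comNzRingType) (n m : nat) (A : 'I_n.+1 -> 'M[R]_m.+1)
  (y : 'rV[R]_m.+1) (i : 'I_n.+1) : R := (y *m A i *m y^T) 0 0.

Definition qform (R : comNzRingType) (m : nat) (M : 'M[R]_m.+1) : {mpoly R[m.+1]} :=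
  \sum_(a < m.+1) \sum_(b < m.+1) M a b *: ('X_a * 'X_b).

(* Z(F) is singular at the projective point [y] (Jacobian criterion) *)
Definition singular_at (R : comNzRingType) (N : nat) (F : {mpoly R[N.+1]})
  (y : 'rV[R]_N.+1) : Prop :=
  y != 0 /\ ev F y = 0 /\ forall j : 'I_N.+1, ev (mderiv j F) y = 0.

Definition hyp_singular (R : comNzRingType) (N : nat) (F : {mpoly R[N.+1]}) : Prop :=
  exists y : 'rV[R]_N.+1, singular_at F y.

Definition smooth_pt (R : comNzRingType) (N : nat) (F : {mpoly R[N.+1]})
  (x : 'rV[R]_N.+1) : Prop :=
  x != 0 /\ ev F x = 0 /\ exists j : 'I_N.+1, ev (mderiv j F) x != 0.

Definition mapA (k K : fieldType) (iota : {rmorphism k -> K}) (n m : nat)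
  (A : 'I_n.+1 -> 'M[k]_m.+1) : 'I_n.+1 -> 'M[K]_m.+1 :=
  fun i => map_mx iota (A i).

(* Main.v *)
Require Import Defs.
From HB Require Import structures.
From mathcomp Require Import all_boot all_order all_algebra.
From mathcomp Require Import mpoly.
From mathcomp Require Import ring.
Import GRing.Theory.
Local Open Scope ring_scope.
Set Implicit Arguments. Unset Strict Implicit.

Lemma mderivXU (R : comNzRingType) N (i j : 'I_N) :
  mderiv i ('X_j : {mpoly R[N]}) = (i == j)%:R.
Proof.
rewrite mderivX mnm1E eq_sym.
case: eqP => [->|_]; last by rewrite scale0r.
have -> : (U_(j) - U_(j))%MM = 0%MM :> 'X_{1..N}.
  by apply/mnmP=> k; rewrite !mnmE subnn.
by rewrite scale1r mpolyX0.
Qed.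

Lemma ev_sum_pencil (K : fieldType) n m (B : 'I_n.+1 -> 'M[K]_m.+1) (x : 'rV[K]_n.+1) (a b : 'I_m.+1) :
  meval (fun i => x 0 i) (pencil B a b) = pencil_at B x a b.
Proof.
rewrite /pencil /pencil_at mxE summxE raddf_sum; apply: eq_bigr => i _.
by rewrite /= mevalM mevalXU mevalC mxE.
Qed.
Section Deriv.
Variable R : comNzRingType.
Variable D : R -> R.
Hypothesis DD : forall a b, D (a + b) = D a + D b.
Hypothesis DM : forall a b, D (a * b) = D a * b + a * D b.

Lemma D0 : D 0 = 0.
Proof. have h := DD 0 0; rewrite addr0 in h; apply: (addrI (D 0)); by rewrite addr0 -h. Qed.

Lemma D1 : D 1 = 0.
Proof. have h := DM 1 1; rewrite mulr1 mulr1 mul1r in h; apply: (addrI (D 1)); by rewrite addr0 -h. Qed.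

Lemma Dsum (I : Type) (r : seq I) (F : I -> R) :
  D (\sum_(i <- r) F i) = \sum_(i <- r) D (F i).
Proof.
elim: r => [|x r IH]; first by rewrite !big_nil D0.
by rewrite !big_cons DD IH.
Qed.

Lemma Dsign (b : nat) (p : R) : D ((-1) ^+ b * p) = (-1) ^+ b * D p.
Proof.
have Dm1 : D (-1) = 0.
  by have h := DD (-1) 1; rewrite addNr D0 D1 addr0 in h.
have Db : D ((-1) ^+ b) = 0.
  elim: b => [|b IH]; first by rewrite expr0 D1.
  by rewrite exprS DM Dm1 IH mul0r mulr0 addr0.
by rewrite DM Db mul0r add0r.
Qed.

Lemma Dprod (I : eqType) (r : seq I) (F : I -> R) : uniq r ->
  D (\prod_(i <- r) F i) =
  \sum_(a <- r) \prod_(i <- r) (if i == a then D (F i) else F i).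
Proof.
elim: r => [|x r IH] /=; first by rewrite !big_nil D1.
case/andP=> xr ur.
rewrite big_cons DM IH // big_cons big_cons eqxx; congr (_ + _).
  congr (_ * _); rewrite !big_seq; apply: eq_bigr => i ir.
  by case: eqP ir xr => // -> ->.
rewrite big_distrr /=; rewrite !big_seq; apply: eq_bigr => a ar.
rewrite big_cons; case: eqP ar xr => [-> -> //|_ _ _].
by rewrite big_seq.
Qed.

Lemma Ddet n (P : 'M[R]_n) :
  D (\det P) = \sum_(a < n) \sum_(c < n) D (P a c) * cofactor P a c.
Proof.
rewrite /determinant Dsum.
under eq_bigr do rewrite Dsign Dprod ?index_enum_uniq // big_distrr /=.
rewrite exchange_big /=; apply: eq_bigr => a _.
pose Pa := \matrix_(i, j) (if i == a then D (P i j) else P i j).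
have -> : \sum_(c < n) D (P a c) * cofactor P a c = \det Pa.
  rewrite (expand_det_row Pa a); apply: eq_bigr => c _.
  rewrite mxE eqxx; congr (_ * _); rewrite /cofactor; congr (_ * _).
  congr (\det _); apply/matrixP => i j; rewrite !mxE.
  by rewrite eq_sym (negPf (neq_lift a i)).
rewrite /determinant; apply: eq_bigr => s _; congr (_ * _).
by apply: eq_bigr => i _; rewrite mxE.
Qed.
End Deriv.

Lemma map_pencil (K : fieldType) n m (B : 'I_n.+1 -> 'M[K]_m.+1) (x : 'rV[K]_n.+1) :
  map_mx (meval (fun i => x 0 i)) (pencil B) = pencil_at B x.
Proof. by apply/matrixP => a b; rewrite mxE ev_sum_pencil. Qed.

Lemma ev_det (K : fieldType) n m (B : 'I_n.+1 -> 'M[K]_m.+1) (x : 'rV[K]_n.+1) :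
  ev (detA B) x = \det (pencil_at B x).
Proof. by rewrite /ev /detA -map_pencil det_map_mx. Qed.

Lemma ev_deriv (K : fieldType) n m (B : 'I_n.+1 -> 'M[K]_m.+1) (x : 'rV[K]_n.+1) j :
  ev (mderiv j (detA B)) x =
  \sum_(a < m.+1) \sum_(c < m.+1) B j a c * \adj (pencil_at B x) c a.
Proof.
rewrite /ev /detA (@Ddet _ _ (mderivD j) (mderivM j)) raddf_sum; apply: eq_bigr => a _.
rewrite raddf_sum; apply: eq_bigr => c _.
have -> : mderiv j (pencil B a c) = (B j a c)%:MP.
  rewrite mxE (@Dsum _ _ (mderivD j)) (bigD1 j) //= big1 => [|i /negPf ij].
    by rewrite mderivM mderivXU mderivC eqxx mulr0 addr0 mul1r addr0.
  by rewrite mderivM mderivXU mderivC eq_sym ij mulr0 mul0r addr0.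
rewrite /= mevalM mevalC -map_pencil -map_mx_adj [in RHS]mxE [in RHS]mxE.
done.
Qed.
Lemma adj0 (K : fieldType) m (M : 'M[K]_m.+1) : (\rank M < m)%N -> \adj M = 0.
Proof.
move=> rM; apply/matrixP => i j; rewrite !mxE /cofactor.
set N := row' j (col' i M).
have rN : (\rank N <= \rank M)%N.
  rewrite /N row'Esub rowsubE; apply: leq_trans (mxrankM_maxr _ _) _.
  have -> : col' i M = M *m col' i 1%:M.
    by apply/matrixP => a b; rewrite !mxE (bigD1 (lift i b)) //= big1 => [|k /negPf kb];
      rewrite !mxE ?eqxx ?mulr1 ?addr0 // ?kb ?mulr0.
  exact: mxrankM_maxl.
have -> : \det N = 0; last by rewrite mulr0.
apply/eqP; apply: contraTT rM => dN; rewrite -leqNgt.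
have uN : N \in unitmx by rewrite unitmxE unitfE.
by apply: leq_trans rN; rewrite (mxrank_unit uN).
Qed.

Lemma ker1 (K : fieldType) m (M : 'M[K]_m.+1) (y z : 'rV[K]_m.+1) :
  \rank M = m -> y != 0 -> y *m M = 0 -> z *m M = 0 -> exists c, z = c *: y.
Proof.
move=> rM y0 yM zM.
have yk : (y <= kermx M)%MS by apply/sub_kermxP.
have zk : (z <= kermx M)%MS by apply/sub_kermxP.
have rk : \rank (kermx M) = 1%N by rewrite mxrank_ker rM subSnn.
have ry : \rank y = 1%N by rewrite rank_rV y0.
have /eqmxP e : (y == kermx M)%MS by rewrite -(mxrank_leqif_eq yk) ry rk.
by apply/sub_rVP; rewrite e.
Qed.
Lemma sum_delta (R : comNzRingType) N (j : 'I_N) (F : 'I_N -> R) :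
  \sum_(a < N) (j == a)%:R * F a = F j.
Proof.
rewrite (bigD1 j) //= eqxx mul1r big1 ?addr0 // => a /negPf.
by rewrite eq_sym => ->; rewrite mul0r.
Qed.

Lemma ev_qform (R : comNzRingType) m (M : 'M[R]_m.+1) (y : 'rV[R]_m.+1) :
  ev (qform M) y = (y *m M *m y^T) 0 0.
Proof.
rewrite /ev /qform !mxE raddf_sum.
under eq_bigr do rewrite raddf_sum.
rewrite exchange_big /=; apply: eq_bigr => b _.
rewrite !mxE big_distrl /=; apply: eq_bigr => a _.
by rewrite /= mevalZ mevalM !mevalXU mulrA (mulrC (M a b)).
Qed.

Lemma ev_dqform (R : comNzRingType) m (M : 'M[R]_m.+1) (y : 'rV[R]_m.+1) j :
  ev (mderiv j (qform M)) y = (y *m M) 0 j + (y *m M^T) 0 j.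
Proof.
have -> : mderiv j (qform M) = \sum_(a < m.+1) \sum_(b < m.+1)
    M a b *: ((j == a)%:R * 'X_b + 'X_a * (j == b)%:R).
  rewrite /qform (@Dsum _ _ (mderivD j)); apply: eq_bigr => a _.
  rewrite (@Dsum _ _ (mderivD j)); apply: eq_bigr => b _.
  by rewrite mderivZ mderivM !mderivXU.
rewrite /ev raddf_sum.
under eq_bigr do rewrite raddf_sum.
under eq_bigr do under eq_bigr do rewrite /= mevalZ mevalD !mevalM !mevalXU !rmorph_nat mulrDr.
under eq_bigr do rewrite big_split /=.
rewrite big_split /= addrC; congr (_ + _).
  rewrite !mxE; apply: eq_bigr => a _.
  rewrite -(@sum_delta _ _ j (fun b => y 0 a * M a b)) /=; apply: eq_bigr => b _.
  by ring.
rewrite (eq_bigr (fun a => (j == a)%:R * \sum_(b < m.+1) M a b * y 0 b)).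
  rewrite sum_delta !mxE; apply: eq_bigr => b _; rewrite mxE; ring.
move=> a _; rewrite big_distrr /=; apply: eq_bigr => b _; ring.
Qed.

Lemma map_detA (k K : fieldType) (iota : {rmorphism k -> K}) n m (A : 'I_n.+1 -> 'M[k]_m.+1) :
  map_mpoly iota (detA A) = detA (mapA iota A).
Proof.
rewrite /detA -det_map_mx; congr (\det _); apply/matrixP => a b.
rewrite !mxE rmorph_sum; apply: eq_bigr => i _.
by rewrite rmorphM /= map_mpolyC map_mpolyX mxE.
Qed.

Lemma pencil_sym (K : fieldType) n m (B : 'I_n.+1 -> 'M[K]_m.+1) (x : 'rV[K]_n.+1) :
  (forall i, (B i)^T = B i) -> (pencil_at B x)^T = pencil_at B x.
Proof.
move=> hB; apply/matrixP => a b; rewrite mxE /pencil_at !summxE; apply: eq_bigr => i _.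
by rewrite !mxE; move/matrixP/(_ a b): (hB i); rewrite mxE => ->.
Qed.

Lemma qform_pencil (K : fieldType) n m (B : 'I_n.+1 -> 'M[K]_m.+1) (x : 'rV[K]_n.+1) y :
  (y *m pencil_at B x *m y^T) 0 0 = \sum_i x 0 i * psi B y i.
Proof.
rewrite /pencil_at mulmx_sumr mulmx_suml summxE; apply: eq_bigr => i _.
by rewrite -scalemxAr -scalemxAl mxE.
Qed.

Lemma sing_of_ker (R : comNzRingType) m (M : 'M[R]_m.+1) (y : 'rV[R]_m.+1) :
  M^T = M -> y != 0 -> y *m M = 0 -> singular_at (qform M) y.
Proof.
move=> hM y0 yM; split => //; split.
  by rewrite ev_qform yM mul0mx mxE.
by move=> j; rewrite ev_dqform hM yM mxE addr0.
Qed.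

Lemma nz_coord (R : comNzRingType) N (y : 'rV[R]_N) : y != 0 -> exists k, y 0 k != 0.
Proof.
move=> y0; case: (pickP (fun k => y 0 k != 0)) => [k yk|ny]; first by exists k.
case/eqP: y0; apply/matrixP => i k; rewrite ord1 mxE.
by move: (ny k) => /negbFE/eqP.
Qed.

Lemma sum_delta2 (R : comNzRingType) N (i k : 'I_N) (a b : R) (f : 'I_N -> R) :
  \sum_l (((l == i)%:R * a - (l == k)%:R * b) * f l) = a * f i - b * f k.
Proof.
rewrite (eq_bigr (fun l => (i == l)%:R * (a * f l) - (k == l)%:R * (b * f l))).
  by rewrite sumrB !sum_delta.
by move=> l _; rewrite ![_ == l]eq_sym; ring.
Qed.
Unset Implicit Arguments. Set Strict Implicit.

Theorem proposition2p0p2 (k : fieldType) (K : closedFieldType)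
  (iota : {rmorphism k -> K}) (n m : nat) (A : 'I_n.+1 -> 'M[k]_m.+1) :
  (2 \notin [pchar k])%N -> (3 \notin [pchar k])%N ->
  (* K is an algebraic closure of k *)
  (forall a : K, exists2 p : {poly k}, p != 0 & root (map_poly iota p) a) ->
  (forall i, (A i)^T = A i) ->
  mreduced (detA A) -> mirreducible (detA A) ->
  (* theta_X(x) = psi(phi(x)) at smooth points *)
  (forall x : 'rV[K]_n.+1, smooth_pt (map_mpoly iota (detA A)) x ->
     \rank (pencil_at (mapA iota A) x) = m /\
     forall y : 'rV[K]_m.+1, y != 0 -> y *m pencil_at (mapA iota A) x = 0 ->
       exists2 c : K, c != 0 &
         forall i, ev (mderiv i (map_mpoly iota (detA A))) x = c * psi (mapA iota A) y i)
  /\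
  (* Z(psi^(x)) singular iff x in X *)
  (forall x : 'rV[K]_n.+1, x != 0 ->
     hyp_singular (qform (pencil_at (mapA iota A) x)) <->
     ev (map_mpoly iota (detA A)) x = 0)
  /\
  (* Z(psi^(x)) singular at phi(x) whenever phi(x) is defined *)
  (forall x : 'rV[K]_n.+1, x != 0 -> ev (map_mpoly iota (detA A)) x = 0 ->
     \rank (pencil_at (mapA iota A) x) = m ->
     forall y : 'rV[K]_m.+1, y != 0 -> y *m pencil_at (mapA iota A) x = 0 ->
       singular_at (qform (pencil_at (mapA iota A) x)) y)
  /\
  (* fibre of psi over [H] = base locus of psi^ restricted to H *)
  (forall h : 'rV[K]_n.+1, h != 0 ->
     forall y : 'rV[K]_m.+1, y != 0 ->
       (exists c : K, forall i, psi (mapA iota A) y i = c * h 0 i) <->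
       (forall x : 'rV[K]_n.+1, x != 0 -> (x *m h^T) 0 0 = 0 ->
          ev (qform (pencil_at (mapA iota A) x)) y = 0)).
Proof.
move=> ch2 _ _ hA _ _.
rewrite map_detA.
set B := mapA iota A.
have hB : forall i, (B i)^T = B i by move=> i; rewrite /B /mapA map_trmx hA.
have h2 : (2%:R : K) != 0.
  have := fmorph_pchar iota 2; rewrite !inE /= => e.
  move: ch2; rewrite !inE /= -e.
  by [].
split.
  move=> x [x0 [hx [j hj]]].
  set M := pencil_at B x.
  rewrite ev_det -/M in hx.
  have adjnz : \adj M != 0.
    apply: contra hj => /eqP a0; rewrite ev_deriv -/M a0.
    by apply/eqP; apply: big1 => a _; apply: big1 => c _; rewrite !mxE mulr0.
  have rle : (\rank M <= m)%N.
    have : ~~ row_free M by rewrite row_free_unit unitmxE unitfE hx eqxx.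
    by rewrite /row_free -ltnS ltn_neqAle rank_leq_row andbT.
  have rge : (m <= \rank M)%N.
    rewrite leqNgt; apply/negP => /adj0 a0; by rewrite a0 eqxx in adjnz.
  have rM : \rank M = m by apply/eqP; rewrite eqn_leq rle rge.
  split => // y y0 yM.
  have [kk ykk] := nz_coord y0.
  have rowK : forall a, exists u, forall b, \adj M a b = u * y 0 b.
    move=> a; have [u hu] : exists u, row a (\adj M) = u *: y.
      apply: (ker1 rM y0 yM).
      by rewrite -row_mul mul_adj_mx hx raddf0 row0.
    by exists u => b; move/matrixP/(_ 0 b): hu; rewrite !mxE.
  have colK : forall b, exists v, forall a, \adj M a b = v * y 0 a.
    move=> b; have [v hv] : exists v, row b (\adj M)^T = v *: y.
      apply: (ker1 rM y0 yM).
      have sM : M^T = M := pencil_sym x hB.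
      by rewrite -row_mul -[X in _ *m X]sM -trmx_mul mul_mx_adj hx raddf0 trmx0 row0.
    by exists v => a; move/matrixP/(_ 0 a): hv; rewrite !mxE.
  set c0 := \adj M kk kk / (y 0 kk ^+ 2).
  have hadj : forall a b, \adj M a b = c0 * y 0 a * y 0 b.
    move=> a b; have [u hu] := rowK a; have [v hv] := colK kk.
    have e4 := hv kk; have e3 := hv a; have e2 := hu kk.
    have hu' : u = v * y 0 a / y 0 kk by rewrite -e3 e2 mulfK.
    by rewrite hu /c0 e4 hu'; field.
  have hf : forall i, ev (mderiv i (detA B)) x = c0 * psi B y i.
    move=> i; rewrite ev_deriv -/M /psi.
    rewrite mxE big_distrr /=. 
    rewrite exchange_big /=; apply: eq_bigr => a _.
    rewrite !mxE big_distrl big_distrr /=; apply: eq_bigr => c _.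
    by rewrite hadj !mxE; ring.
  exists c0 => //.
  by apply: contraNneq hj => c00; rewrite hf c00 mul0r.
split.
  move=> x x0; rewrite ev_det; split.
    case=> y [y0 [_ hd]]; apply/eqP/det0P; exists y => //.
    apply/matrixP => i j; rewrite ord1 [RHS]mxE.
    move: (hd j); rewrite ev_dqform pencil_sym // -mulr2n -mulr_natl.
    by move/eqP; rewrite mulf_eq0 (negPf h2) /= => /eqP.
  move/eqP/det0P => [y y0 yM]; exists y.
  exact: sing_of_ker (pencil_sym x hB) y0 yM.
split.
  move=> x _ _ _ y y0 yM.
  exact: sing_of_ker (pencil_sym x hB) y0 yM.
move=> h h0 y y0; split.
  case=> c hc x _ xh; rewrite ev_qform qform_pencil.
  under eq_bigr do rewrite hc.
  have xh' : \sum_i x 0 i * h 0 i = 0.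
    rewrite -[LHS]/(_ : K) ; transitivity ((x *m h^T) 0 0); last exact: xh.
    by rewrite mxE; apply: eq_bigr => i _; rewrite mxE.
  rewrite (eq_bigr (fun i => c * (x 0 i * h 0 i))) => [|i _]; last by ring.
  by rewrite -big_distrr /= xh' mulr0.
move=> H; have [kk hk] := nz_coord h0.
exists (psi B y kk / h 0 kk) => i.
case: (eqVneq i kk) => [->|ik]; first by rewrite mulfVK.
pose x := \row_l ((l == i)%:R * h 0 kk - (l == kk)%:R * h 0 i).
have x0 : x != 0.
  apply: contraNneq hk => /matrixP/(_ 0 i); rewrite !mxE eqxx (negPf ik).
  by rewrite mul1r mul0r subr0 => ->.
have xh : (x *m h^T) 0 0 = 0.
  rewrite mxE (eq_bigr (fun l => ((l == i)%:R * h 0 kk - (l == kk)%:R * h 0 i) * h 0 l)).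
    by rewrite sum_delta2 mulrC subrr.
  by move=> l _; rewrite !mxE.
move: (H x x0 xh); rewrite ev_qform qform_pencil.
rewrite (eq_bigr (fun l => ((l == i)%:R * h 0 kk - (l == kk)%:R * h 0 i) * psi B y l)).
  rewrite sum_delta2 => /eqP; rewrite subr_eq0 => /eqP e.
  apply: (mulIf hk); rewrite mulrC e; field.
  exact: hk.
by move=> l _; rewrite !mxE.
Qed.
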